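(* Consider the following two-player game between a random player $\mathfrak{R}$ and a deterministic player $\mathfrak{D}$. Initially there is a pile of $n \geq 1$ elements. The players alternate turns, with $\mathfrak{R}$ moving first. On each turn of $\mathfrak{R}$, if the pile currently contains exactly $m$ elements, $\mathfrak{R}$ removes $k$ elements, where $k$ is chosen uniformly at random from $\{1, \ldots, m\}$, independently of all previous choices. On each turn of $\mathfrak{D}$, $\mathfrak{D}$ removes exactly one element. The player who removes the last element (so that the pile is empty at the end of its turn) wins. Let $D_n$ denote the probability that $\mathfrak{D}$ wins when the game starts with $n$ elements. Then for every $n \geq 1$, $$D_n = \sum_{k=0}^{n}\frac{(-1)^k}{k!} = \frac{d_n}{n!},$$ where $d_n$ is the number of derangements (fixed-point-free permutations) of an $n$-element set. In particular, $\lim_{n\to\infty} D_n = e^{-1}$. *)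

(* Defs.v *)
From HB Require Import structures.
From mathcomp Require Import all_boot all_order all_algebra all_fingroup.
From mathcomp Require Import all_classical all_reals all_analysis.
Set Implicit Arguments. Unset Strict Implicit. Unset Printing Implicit Defensive.
Import Order.TTheory GRing.Theory Num.Theory.
Local Open Scope ring_scope.

(* dwin_R fuel m = probability that the deterministic player D wins when the
   random player R is about to move and the pile has m >= 1 elements.
   R removes k, uniformly in {1..m} (probability 1/m each):
   - if k = m, R took the last element: R wins (contribution 0);
   - otherwise D moves on a pile of m-k >= 1 elements and removes one:
     if m-k = 1 D took the last element and wins (contribution 1),
     else the game continues with R to move on m-k-1 elements.
   [fuel] only ensures structural recursion; fuel >= m suffices. *)
Fixpoint dwin_R (R : realType) (fuel m : nat) : R :=
  match fuel with
  | 0 => 0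
  | f.+1 =>
      m%:R^-1 * \sum_(1 <= k < m.+1)
        (if (k == m)%N then 0
         else if (m - k == 1)%N then 1
         else dwin_R R f (m - k - 1)%N)
  end.

Definition D_prob (R : realType) (n : nat) : R := dwin_R R n n.

Definition derangements (n : nat) : nat :=
  #|[set s : 'S_n | [forall i, s i != i]]|.

(* Main.v *)
Require Import Defs.
From HB Require Import structures.
From mathcomp Require Import all_boot all_order all_algebra all_fingroup.
From mathcomp Require Import all_classical all_reals all_analysis.
From mathcomp Require Import ring lra zify.
Import Order.TTheory GRing.Theory Num.Theory.
Import numFieldNormedType.Exports.
Local Open Scope ring_scope.


Section P1.
Variable R : realType.

Lemma dwin_fuel f g m : (m <= f)%N -> (m <= g)%N -> dwin_R R f m = dwin_R R g m.
Proof.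
elim: f g m => [|f IH] [|g] m /=.
- by [].
- rewrite leqn0 => /eqP -> _; rewrite big_geq ?mulr0 //.
- move=> _; rewrite leqn0 => /eqP ->; rewrite big_geq ?mulr0 //.
- move=> hf hg; congr (_ * _); apply: eq_big_nat => k /andP [k1 km].
  case: eqP => // /eqP kn; case: eqP => // /eqP k2.
  apply: IH; lia.
Qed.

Definition aa m := dwin_R R m m.
Definition hh j := if j == 0%N then 0 else if j == 1%N then 1 else aa j.-1.

Lemma aa_rec m : (0 < m)%N -> m%:R * aa m = \sum_(0 <= j < m) hh j.
Proof.
case: m => // m _; rewrite /aa /= mulVKf ?pnatr_eq0 //.
rewrite big_add1 /= [RHS]big_nat_rev /= add0n.
apply: eq_big_nat => k /andP [_ km].
rewrite /hh; have -> : (m.+1 - k.+1 = m - k)%N by lia.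
rewrite /hh eqSS.
have -> : (m - k == 0)%N = (k == m) by apply/eqP/eqP; lia.
case: eqP => // /eqP h1.
case: eqP => // /eqP h2; rewrite /aa; have -> : (m - k).-1 = (m - k - 1)%N by lia.
apply: dwin_fuel; lia.
Qed.

Definition TT m : R := \sum_(0 <= k < m.+1) (-1) ^+ k / (k`!)%:R.

Lemma TT_S m : TT m.+1 = TT m + (-1) ^+ m.+1 / (m.+1`!)%:R.
Proof. by rewrite /TT big_nat_recr. Qed.

Lemma TT_rec m : (m.+2)%:R * TT m.+2 = (m.+1)%:R * TT m.+1 + TT m.
Proof.
rewrite !TT_S !factS !natrM !exprS.
have h1 : (m`!)%:R != 0 :> R by rewrite pnatr_eq0 -lt0n fact_gt0.
have h2 : (m.+1)%:R != 0 :> R by rewrite pnatr_eq0.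
have h3 : (m.+2)%:R != 0 :> R by rewrite pnatr_eq0.
rewrite -!natrM !natrM.
have -> : (m.+2)%:R = (m.+1)%:R + 1 :> R by rewrite -natr1.
field.
have hm : 0 <= m%:R :> R by apply: ler0n.
by rewrite h1 /=; apply/andP; split; apply: lt0r_neq0; lra.
Qed.

Lemma aa_TT m : aa m.+1 = TT m.+1 /\ aa m.+2 = TT m.+2.
Proof.
elim: m => [|m [IH1 IH2]].
  have r1 := @aa_rec 1 isT; have r2 := @aa_rec 2 isT.
  rewrite mul1r big_nat1 /hh /= in r1.
  rewrite !big_nat_recr //= big_geq // /hh /= add0r in r2.
  rewrite /TT !big_nat_recr //= big_geq // r1; split.
    by rewrite add0r expr0 expr1 fact0 div1r divr1 invr1 addrN.
  apply: (@mulfI _ 2%:R); first by rewrite pnatr_eq0.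
rewrite r2 (_ : 0`! = 1)%N // (_ : 1`! = 1)%N // (_ : 2`! = 2)%N //.
  by rewrite expr0 expr1 sqrrN expr1n; field.
split; first exact: IH2.
have r := @aa_rec m.+3 isT.
rewrite big_nat_recr //= -aa_rec // /hh /= IH1 IH2 -TT_rec in r.
by apply: (mulfI _ r); rewrite pnatr_eq0.
Qed.
End P1.
Section P2.
Variable R : realType.

Lemma alt_sum (T : finType) (B : {set T}) :
  \sum_(A : {set T} | A \subset B) (-1 : R) ^+ #|A| = (B == finset.set0)%:R.
Proof.
have [->|/finset.set0Pn [x xB]] := eqVneq B finset.set0.
  rewrite (eq_bigl (pred1 finset.set0)); last by move=> A; rewrite finset.subset0.
  by rewrite big_pred1_eq finset.cards0 expr0.
set S := LHS.
pose h (A : {set T}) := if x \in A then A :\ x else x |: A.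
have hK : involutive h.
  move=> A; rewrite /h; case: (boolP (x \in A)) => xA.
    by rewrite finset.setD11 finset.setD1K.
  by rewrite finset.setU11 finset.setU1K.
have hS : S = - S.
  rewrite {1}/S (reindex_inj (inv_inj hK)) /S -sumrN.
  apply: eq_big => A.
    rewrite /h; case: (boolP (x \in A)) => xA.
      apply/idP/idP => sub.
        apply/fintype.subsetP => y yA; case: (eqVneq y x) => [->//|yx].
        by apply: (fintype.subsetP sub); rewrite finset.in_setD1 yx.
      by apply: fintype.subset_trans sub; apply: finset.subD1set.
    by rewrite finset.subUset finset.sub1set xB.
  move=> _; rewrite /h; case: (boolP (x \in A)) => xA.
    by rewrite [in RHS](finset.cardsD1 x A) xA add1n exprS mulN1r opprK.
  by rewrite finset.cardsU1 xA add1n exprS mulN1r.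
rewrite /= (_ : S = 0) //; lra.
Qed.


Lemma fix_count n (A : {set 'I_n}) :
  #|[pred s : 'S_n | A \subset [set i | s i == i]]| = (n - #|A|)`!.
Proof.
have -> : (n - #|A| = #|~: A|)%N.
  have h1 := finset.cardsC A; have h2 := card_ord n.
  have h3 := max_card (mem A); rewrite h2 in h3.
  by apply: (@addnI #|A|); rewrite h1 h2 subnKC.
rewrite -card_perm.
apply: eq_card => s; rewrite !inE /perm_on.
apply/idP/idP => H.
  apply/fintype.subsetP => i; rewrite !inE => si; apply: contra si => iA.
  by have := fintype.subsetP H i iA; rewrite inE.
apply/fintype.subsetP => i iA; rewrite inE; apply/negPn/negP => si.
by have := fintype.subsetP H i; rewrite !inE si => /(_ isT); rewrite iA.
Qed.

Lemma derange_sum n :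
  (derangements n)%:R = \sum_(A : {set 'I_n}) (-1 : R) ^+ #|A| *+ (n - #|A|)`!.
Proof.
rewrite /derangements -sumr_const big_mkcond /=.
under eq_bigr => s _.
  have -> : (s \in [set s0 : 'S_n | [forall i, s0 i != i]]) =
            ([set i | s i == i] == finset.set0).
    rewrite inE; apply/forallP/eqP => [H|H].
      by apply/setP => i; rewrite !inE (negbTE (H i)).
    move=> i; apply/negP => si.
    by have := finset.in_set0 i; rewrite -H inE si.
  rewrite (_ : (if _ then _ else _) = ([set i | s i == i] == finset.set0)%:R :> R); last by case: (_ == _).
  rewrite -(@alt_sum _ [set i | s i == i]).
  over.
rewrite /= (exchange_big_dep xpredT) //=.
apply: eq_bigr => A _.
rewrite -fix_count -sumr_const; apply: eq_bigl => s; by rewrite !inE.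
Qed.


Lemma card_sum n (F : nat -> R) :
  \sum_(A : {set 'I_n}) F #|A| = \sum_(0 <= k < n.+1) F k *+ 'C(n, k).
Proof.
rewrite big_mkord (partition_big (fun A : {set 'I_n} => inord #|A| : 'I_n.+1) xpredT) //=.
apply: eq_bigr => k _.
have hc := card_draws 'I_n k; rewrite card_ord in hc.
rewrite -hc -sumr_const.
apply: eq_big => [A|A /eqP <-].
  have := max_card (mem A); rewrite card_ord => hA.
  by rewrite inE -val_eqE /= inordK.
by rewrite inordK //; have := max_card (mem A); rewrite card_ord.
Qed.


Lemma derange_formula n :
  (derangements n)%:R = (n`!)%:R * \sum_(0 <= k < n.+1) (-1 : R) ^+ k / (k`!)%:R.
Proof.
rewrite derange_sum (@card_sum n (fun k => (-1 : R) ^+ k *+ (n - k)`!)) mulr_sumr.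
apply: eq_big_nat => k /andP [_ hk]; rewrite ltnS in hk.
have h1 : (k`!)%:R != 0 :> R by rewrite pnatr_eq0 -lt0n fact_gt0.
rewrite -mulrnA -mulr_natr -(bin_fact hk) !natrM.
field; exact: h1.
Qed.

End P2.

Local Open Scope classical_set_scope.
Local Open Scope ring_scope.

Theorem mainTheorem1 (R : realType) :
  (forall n : nat, (1 <= n)%N ->
     D_prob R n = \sum_(0 <= k < n.+1) (-1) ^+ k / (k`!)%:R
     /\ D_prob R n = (derangements n)%:R / (n`!)%:R)
  /\ (D_prob R @ \oo --> expR (-1 : R)).
Proof.
have E m : D_prob R m.+1 = TT R m.+1 by exact: (aa_TT R m).1.
split.
  move=> n hn; have [m ->] : exists m, n = m.+1 by exists n.-1; lia.
  split; first exact: E m.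
  rewrite E derange_formula /TT [X in _ = X / _]mulrC mulfK // pnatr_eq0 -lt0n fact_gt0 //.
have H2 : series (exp_coeff (-1 : R)) @ \oo --> expR (-1 : R).
  exact: is_cvg_series_exp_coeff.
rewrite -cvg_shiftS -cvg_shiftS in H2.
rewrite -cvg_shiftS.
suff -> : [sequence D_prob R n.+1]_n =
  [sequence [sequence series (exp_coeff (-1 : R)) n0.+1]_n0 n.+1]_n by exact: H2.
apply/funext => n /=; rewrite E /TT /series /exp_coeff /=.
by [].
Qed.
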